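(* Suppose $(\hat{\mathbf{x}},\hat{\mathbf{z}},\boldsymbol{\tau}_x,\boldsymbol{\tau}_p)$ is a solution to the optimization $$\min_{\bar{\mathbf{x}},\bar{\mathbf{z}},\bar{\boldsymbol{\tau}}_x,\bar{\boldsymbol{\tau}}_p} F_{\rm SP}(\bar{\mathbf{x}},\bar{\mathbf{z}},\bar{\boldsymbol{\tau}}_x,\bar{\boldsymbol{\tau}}_p)\quad\text{s.t. } \bar{\mathbf{z}}=\mathbf{A}\bar{\mathbf{x}},\ \bar{\boldsymbol{\tau}}_p=\mathbf{S}\bar{\boldsymbol{\tau}}_x. \qquad (\ast)$$ Then this $\boldsymbol{\tau}_p$, together with the densities $(\hat b_x,\hat b_z)$ attaining the minima defining $F^x_{\rm SP}(\hat{\mathbf{x}},\boldsymbol{\tau}_x)$ and $F^z_{\rm SP}(\hat{\mathbf{z}},\boldsymbol{\tau}_p)$, is a minimizer of the variational optimization $$\min_{b_x,b_z,\bar{\boldsymbol{\tau}}_p} J_{\rm SP}(b_x,b_z,\bar{\boldsymbol{\tau}}_p)\quad\text{s.t. } \mathbb{E}(\mathbf{z}|b_z)=\mathbf{A}\,\mathbb{E}(\mathbf{x}|b_x),\ \ \bar{\boldsymbol{\tau}}_p=\mathbf{S}\,\mathrm{var}(\mathbf{x}|b_x). \qquad (\ast\ast)$$ Conversely, given any solution $(\hat b_x,\hat b_z,\boldsymbol{\tau}_p)$ of $(\ast\ast)$, the vectors $\hat{\mathbf{x}}=\mathbb{E}(\mathbf{x}|\hat b_x)$, $\boldsymbol{\tau}_x=\mathrm{var}(\mathbf{x}|\hat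 b_x)$, $\hat{\mathbf{z}}=\mathbb{E}(\mathbf{z}|\hat b_z)$, $\boldsymbol{\tau}_p=\mathbf{S}\boldsymbol{\tau}_x$ together are a solution to $(\ast)$.
   Context: $\mathbf{A}\in\mathbb{R}^{m\times n}$, $\mathbf{S}:=|\mathbf{A}|^2$ (entrywise squared magnitude). $f_x(\mathbf{x})=\sum_{j=1}^n f_{x_j}(x_j)$, $f_z(\mathbf{z})=\sum_{i=1}^m f_{z_i}(z_i)$. Densities $b_x$ on $\mathbb{R}^n$ and $b_z$ on $\mathbb{R}^m$ range over factorizable (product) densities $b_x=\prod_j b_{x_j}$, $b_z=\prod_i b_{z_i}$. $\mathbb{E}(\cdot|b)$ denotes the mean vector and $\mathrm{var}(\cdot|b)$ the vector of componentwise variances (not a covariance matrix). $D(b\|e^{-f}):=\int b\log(b/e^{-f})$. For positive $\bar{\boldsymbol{\tau}}_p$, $H_{\rm gauss}(b_z,\bar{\boldsymbol{\tau}}_p):=\sum_{i=1}^m\big[\frac{1}{2\bar\tau_{p_i}}\mathrm{var}(z_i|b_{z_i})+\frac12\log(2\pi\bar\tau_{p_i})\big]$ and $J_{\rm SP}(b_x,b_z,\bar{\boldsymbol{\tau}}_p):=D(b_x\|e^{-f_x})+D(b_z\|e^{-f_z})+H_{\rm gauss}(b_z,\bar{\boldsymbol{\tau}}_p)$. Further, $F^x_{\rm SP}(\bar{\mathbf{x}},\bar{\boldsymbol{\tau}}_x):=\min_{b_x}D(b_x\|e^{-f_x})$ s.t. $\mathbb{E}(\mathbf{x}|b_x)=\bar{\mathbf{x}}$,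 $\mathrm{var}(\mathbf{x}|b_x)=\bar{\boldsymbol{\tau}}_x$; $F^z_{\rm SP}(\bar{\mathbf{z}},\bar{\boldsymbol{\tau}}_p):=\min_{b_z}\big[D(b_z\|e^{-f_z})+H_{\rm gauss}(b_z,\bar{\boldsymbol{\tau}}_p)\big]$ s.t. $\mathbb{E}(\mathbf{z}|b_z)=\bar{\mathbf{z}}$; $F_{\rm SP}(\bar{\mathbf{x}},\bar{\mathbf{z}},\bar{\boldsymbol{\tau}}_x,\bar{\boldsymbol{\tau}}_p):=F^x_{\rm SP}(\bar{\mathbf{x}},\bar{\boldsymbol{\tau}}_x)+F^z_{\rm SP}(\bar{\mathbf{z}},\bar{\boldsymbol{\tau}}_p)$. *)

(* Defs.v *)
From HB Require Import structures.
From mathcomp Require Import all_boot all_order all_algebra.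
From mathcomp Require Import all_classical all_reals all_analysis.
Set Implicit Arguments. Unset Strict Implicit. Unset Printing Implicit Defensive.
Import Order.TTheory GRing.Theory Num.Theory.
Local Open Scope ring_scope.

Section Defs.
Variable R : realType.

Local Notation leb := (@lebesgue_measure R).

Definition rint (g : R -> R) : R := fine (\int[leb]_x (g x)%:E)%E.

Definition integrableR (g : R -> R) : Prop := leb.-integrable setT (EFin \o g).

Definition is_density (b : R -> R) : Prop :=
  measurable_fun setT b /\ (forall x, 0 <= b x) /\ integrableR b /\ rint b = 1.

(** the integrand of D(b || e^{-f}) = \int b log (b / e^{-f}) = \int b (log b + f) *)
Definition kl_integrand (f b : R -> R) (x : R) : R := b x * (ln (b x) + f x).

Definition admissible (f b : R -> R) : Prop :=
  is_density b /\ integrableR (fun x => x * b x) /\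
  integrableR (fun x => x ^+ 2 * b x) /\ integrableR (kl_integrand f b).

Definition mean (b : R -> R) : R := rint (fun x => x * b x).
Definition var (b : R -> R) : R := rint (fun x => (x - mean b) ^+ 2 * b x).
Definition KL (f b : R -> R) : R := rint (kl_integrand f b).

(** factorizable densities on R^k are given by their factors b_j *)
Definition meanv k (b : 'I_k -> R -> R) : 'cV[R]_k := \col_j mean (b j).
Definition varv k (b : 'I_k -> R -> R) : 'cV[R]_k := \col_j var (b j).

(** D(b || e^{-f}) for factorizable b and separable f *)
Definition Dv k (f : 'I_k -> R -> R) (b : 'I_k -> R -> R) : R :=
  \sum_(j < k) KL (f j) (b j).

Definition admissible_v k (f : 'I_k -> R -> R) (b : 'I_k -> R -> R) : Prop :=
  forall j, admissible (f j) (b j).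

Definition Hgauss m (bz : 'I_m -> R -> R) (tp : 'cV[R]_m) : R :=
  \sum_(i < m) (var (bz i) / (2 * tp i 0) + ln (2 * pi * tp i 0) / 2).

Definition posv m (t : 'cV[R]_m) : Prop := forall i, 0 < t i 0.

Definition Jsp n m (fx : 'I_n -> R -> R) (fz : 'I_m -> R -> R)
  (bx : 'I_n -> R -> R) (bz : 'I_m -> R -> R) (tp : 'cV[R]_m) : R :=
  Dv fx bx + Dv fz bz + Hgauss bz tp.

Definition Smx m n (A : 'M[R]_(m, n)) : 'M[R]_(m, n) := map_mx (fun a => a ^+ 2) A.

Definition Fx_feas n (fx : 'I_n -> R -> R) (xb tx : 'cV[R]_n) (bx : 'I_n -> R -> R) :=
  admissible_v fx bx /\ meanv bx = xb /\ varv bx = tx.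
Definition Fz_feas m (fz : 'I_m -> R -> R) (zb : 'cV[R]_m) (bz : 'I_m -> R -> R) :=
  admissible_v fz bz /\ meanv bz = zb.

Definition Fx_SP n (fx : 'I_n -> R -> R) (xb tx : 'cV[R]_n) : \bar R :=
  ereal_inf [set (Dv fx bx)%:E | bx in Fx_feas fx xb tx].
Definition Fz_SP m (fz : 'I_m -> R -> R) (zb tp : 'cV[R]_m) : \bar R :=
  ereal_inf [set (Dv fz bz + Hgauss bz tp)%:E | bz in Fz_feas fz zb].

(** F_SP = F^x_SP + F^z_SP, with +oo absorbing (an infeasible inner problem
    makes the whole value +oo) *)
Definition F_SP n m (fx : 'I_n -> R -> R) (fz : 'I_m -> R -> R)
  (xb : 'cV[R]_n) (zb : 'cV[R]_m) (tx : 'cV[R]_n) (tp : 'cV[R]_m) : \bar R :=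
  dual_adde (Fx_SP fx xb tx) (Fz_SP fz zb tp).

Definition attains_Fx n (fx : 'I_n -> R -> R) (xb tx : 'cV[R]_n) bx : Prop :=
  Fx_feas fx xb tx bx /\ forall bx', Fx_feas fx xb tx bx' -> Dv fx bx <= Dv fx bx'.
Definition attains_Fz m (fz : 'I_m -> R -> R) (zb tp : 'cV[R]_m) bz : Prop :=
  Fz_feas fz zb bz /\ forall bz', Fz_feas fz zb bz' ->
    Dv fz bz + Hgauss bz tp <= Dv fz bz' + Hgauss bz' tp.

Definition star_feas m n (A : 'M[R]_(m, n)) (xb : 'cV[R]_n) (zb : 'cV[R]_m)
  (tx : 'cV[R]_n) (tp : 'cV[R]_m) : Prop :=
  zb = A *m xb /\ tp = Smx A *m tx /\ posv tp.

Definition solves_star m n (A : 'M[R]_(m, n)) fx fz xh zh tx tp : Prop :=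
  star_feas A xh zh tx tp /\
  forall xb zb txb tpb, star_feas A xb zb txb tpb ->
    (F_SP fx fz xh zh tx tp <= F_SP fx fz xb zb txb tpb)%E.

Definition starstar_feas m n (A : 'M[R]_(m, n)) (fx : 'I_n -> R -> R)
  (fz : 'I_m -> R -> R) bx bz (tp : 'cV[R]_m) : Prop :=
  admissible_v fx bx /\ admissible_v fz bz /\
  meanv bz = A *m meanv bx /\ tp = Smx A *m varv bx /\ posv tp.

Definition solves_starstar m n (A : 'M[R]_(m, n)) fx fz bx bz tp : Prop :=
  starstar_feas A fx fz bx bz tp /\
  forall bx' bz' tp', starstar_feas A fx fz bx' bz' tp' ->
    Jsp fx fz bx bz tp <= Jsp fx fz bx' bz' tp'.

End Defs.

(* Main.v *)
Require Import Defs.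
From mathcomp Require Import all_boot all_order all_algebra.
From mathcomp Require Import all_classical all_reals all_analysis.
Import Order.TTheory GRing.Theory Num.Theory.
Local Open Scope ring_scope.

Theorem lemma2 (R : realType) (m n : nat) (A : 'M[R]_(m, n))
  (fx : 'I_n -> R -> R) (fz : 'I_m -> R -> R) :
  (forall (xh : 'cV[R]_n) (zh : 'cV[R]_m) (tx : 'cV[R]_n) (tp : 'cV[R]_m),
     solves_star A fx fz xh zh tx tp ->
     forall (bx : 'I_n -> R -> R) (bz : 'I_m -> R -> R),
       attains_Fx fx xh tx bx -> attains_Fz fz zh tp bz ->
       solves_starstar A fx fz bx bz tp)
  /\
  (forall (bx : 'I_n -> R -> R) (bz : 'I_m -> R -> R) (tp : 'cV[R]_m),
     solves_starstar A fx fz bx bz tp ->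
     solves_star A fx fz (meanv bx) (meanv bz) (varv bx)
       (mulmx (Smx A) (varv bx))).
Proof.
split.
- move=> xh zh tx tp [[Hz [Htp Hpos]] Hopt] bx bz [[Hax [Hmx Hvx]] Hminx]
    [[Haz Hmz] Hminz].
  split.
    split; first done; split; first done.
    split; first by rewrite Hmz Hmx.
    by split; first rewrite Hvx.
  move=> bx' bz' tp' [Hax' [Haz' [Hm' [Ht' Hp']]]].
  have Hf := Hopt (meanv bx') (meanv bz') (varv bx') tp' (conj Hm' (conj Ht' Hp')).
  have EX : Fx_SP fx xh tx = (Dv fx bx)%:E.
    apply/le_anti/andP; split.
      by apply: ereal_inf_lbound; exists bx => //; split.
    apply: le_ereal_inf_tmp => _ [b Hb <-]; rewrite lee_fin; exact: Hminx.
  have EZ : Fz_SP fz zh tp = (Dv fz bz + Hgauss bz tp)%:E.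
    apply/le_anti/andP; split.
      by apply: ereal_inf_lbound; exists bz => //; split.
    apply: le_ereal_inf_tmp => _ [b Hb <-]; rewrite lee_fin; exact: Hminz.
  have LX : (Fx_SP fx (meanv bx') (varv bx') <= (Dv fx bx')%:E)%E.
    by apply: ereal_inf_lbound; exists bx' => //; split.
  have LZ : (Fz_SP fz (meanv bz') tp' <= (Dv fz bz' + Hgauss bz' tp')%:E)%E.
    by apply: ereal_inf_lbound; exists bz' => //; split.
  move: Hf; rewrite /F_SP EX EZ => Hf.
  have := le_trans Hf (DualAddTheoryRealDomain.lee_dD LX LZ).
  by rewrite -!DualAddTheoryNumDomain.dEFinD lee_fin /Jsp -!addrA.
- move=> bx bz tp [[Hax [Haz [Hm [Ht Hp]]]] Hopt].
  split.
    split; first done; split; first done.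
    by rewrite -Ht.
  move=> xb zb txb tpb [Hzb [Htpb Hpb]].
  have LHS : (F_SP fx fz (meanv bx) (meanv bz) (varv bx) (Smx A *m varv bx)
       <= (Jsp fx fz bx bz tp)%:E)%E.
    rewrite /F_SP -Ht /Jsp -addrA DualAddTheoryNumDomain.dEFinD.
    apply: DualAddTheoryRealDomain.lee_dD; apply: ereal_inf_lbound.
      by exists bx => //; split.
    by exists bz => //; split.
  apply: (le_trans LHS).
  rewrite /F_SP.
  have [[bx0 Hbx0]|Nx] := pselect (exists b, Fx_feas fx xb txb b); last first.
    have -> : Fx_SP fx xb txb = +oo%E.
      apply/eqP; rewrite -leye_eq; apply: le_ereal_inf_tmp => y [b Hb Hy].
      by exfalso; apply: Nx; exists b.
    by rewrite leey.
  have [[bz0 Hbz0]|Nz] := pselect (exists b, Fz_feas fz zb b); last first.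
    have -> : Fz_SP fz zb tpb = +oo%E.
      apply/eqP; rewrite -leye_eq; apply: le_ereal_inf_tmp => y [b Hb Hy].
      by exfalso; apply: Nz; exists b.
    by case: (Fx_SP fx xb txb) => [r||]; rewrite leey.
  set J := Jsp fx fz bx bz tp.
  have key : forall bx' bz', Fx_feas fx xb txb bx' -> Fz_feas fz zb bz' ->
      J <= Dv fx bx' + (Dv fz bz' + Hgauss bz' tpb).
    move=> bx' bz' [Ha1 [Hm1 Hv1]] [Ha2 Hm2]; rewrite addrA; apply: Hopt.
    split; first done; split; first done.
    split; first by rewrite Hm2 Hm1 Hzb.
    by split; first rewrite Hv1 Htpb.
  have lbX : forall bz', Fz_feas fz zb bz' ->
      ((J - (Dv fz bz' + Hgauss bz' tpb))%:E <= Fx_SP fx xb txb)%E.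
    move=> bz' Hz'; apply: le_ereal_inf_tmp => _ [b Hb <-].
    rewrite lee_fin lerBlDr; exact: key.
  have ubX : (Fx_SP fx xb txb <= (Dv fx bx0)%:E)%E.
    by apply: ereal_inf_lbound; exists bx0.
  case EX: (Fx_SP fx xb txb) lbX ubX => [x| |] lbX ubX; last first.
  + by have := lbX _ Hbz0; rewrite leeNy_eq.
  + by move: ubX; rewrite leye_eq.
  have lbZ : ((J - x)%:E <= Fz_SP fz zb tpb)%E.
    apply: le_ereal_inf_tmp => _ [b Hb <-].
    have := lbX _ Hb; rewrite !lee_fin lerBlDr lerBlDl; exact.
  have ubZ : (Fz_SP fz zb tpb <= (Dv fz bz0 + Hgauss bz0 tpb)%:E)%E.
    by apply: ereal_inf_lbound; exists bz0.
  case EZ: (Fz_SP fz zb tpb) lbZ ubZ => [z| |] lbZ ubZ; last first.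
  + by move: lbZ; rewrite leeNy_eq.
  + by move: ubZ; rewrite leye_eq.
  have -> : dual_adde x%:E z%:E = (x + z)%:E by [].
  by move: lbZ; rewrite !lee_fin lerBlDl.
Qed.
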